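(* Let $\mathcal{R}$ be a right amenable cell space with finite stabiliser $G_0$, let $(\mathcal{R},Q,N,\delta)$ be a semi-cellular automaton with $Q$ finite, $N$ finite, whose global transition function is $\Delta$, and let $\mathcal{F}=(F_i)_{i\in I}$ be a right Følner net in $\mathcal{R}$. Suppose $\delta$ is $\bullet$-invariant, $Q$ contains at least two elements, and $\Delta$ is not surjective. Then $\mathrm{h}_{\mathcal{F}}(\Delta(Q^M))<\log|Q|$.
   Context: A cell space $\mathcal{R}$ consists of a group $G$ acting transitively on the left on a nonempty set $M$ via $\triangleright$, a point $m_0\in M$ and a family $(g_{m_0,m})_{m\in M}$ in $G$ with $g_{m_0,m}\triangleright m_0=m$. $G_0$ is the stabiliser of $m_0$, $G/G_0$ the set of left cosets, with $G$ acting by $g\cdot hG_0=ghG_0$. The right semi-action $\triangleleft\colon M\times G/G_0\to M$ is $m\triangleleft gG_0=g_{m_0,m}g\triangleright m_0$. $\mathcal{R}$ is right amenable if there is a finitely additive probability measure $\mu$ on the power set of $M$ such that $\mu(\{a\triangleleft\mathfrak{g}:a\in A\})=\mu(A)$ whenever $\mathfrak{g}\in G/G_0$, $A\subseteq M$ and $m\mapsto m\triangleleft\mathfrak{g}$ is injective on $A$. A right Følner net in $\mathcal{R}$ is a net $(F_i)_{i\in I}$ (over a directed set) of nonempty finite subsets of $M$ with $\lim_{i}\frac{|F_i\setminus\{m: m\triangleleft\mathfrak{g}\in F_i\}|}{|F_i|}=0$ for every $\mathfrak{g}\in G/G_0$. A semi-cellular automaton is $(\mathcal{R},Q,N,\delta)$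 with $Q$ a set, $N\subseteq G/G_0$ with $G_0\cdot N\subseteq N$, $\delta\colon Q^N\to Q$; its global transition function is $\Delta(c)(m)=\delta(n\mapsto c(m\triangleleft n))$. $\delta$ is $\bullet$-invariant if $\delta(g_0\bullet\ell)=\delta(\ell)$ for all $g_0\in G_0$, $\ell\in Q^N$, where $(g_0\bullet\ell)(n)=\ell(g_0^{-1}\cdot n)$. For $A\subseteq M$, $\pi_A\colon Q^M\to Q^A$ is restriction. For $X\subseteq Q^M$, $\mathrm{h}_{\mathcal{F}}(X)=\limsup_{i\in I}\frac{\log|\pi_{F_i}(X)|}{|F_i|}$. *)

(* Defs.v *)
From HB Require Import structures.
From mathcomp Require Import all_boot all_order all_algebra.
From mathcomp Require Import all_classical all_reals.
From mathcomp Require Import ereal exp.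
Set Implicit Arguments. Unset Strict Implicit. Unset Printing Implicit Defensive.
Import Order.TTheory GRing.Theory Num.Theory.
Local Open Scope classical_set_scope.
Local Open Scope ring_scope.

Record group := Group {
  gcar :> Type;
  gmul : gcar -> gcar -> gcar;
  gone : gcar;
  ginv : gcar -> gcar;
  gmulA : forall x y z, gmul x (gmul y z) = gmul (gmul x y) z;
  gmul1 : forall x, gmul gone x = x;
  gmulV : forall x, gmul (ginv x) x = gone }.

(* A cell space: G acts transitively on the left on a nonempty set M, a point
   m0 and a family (g_{m0,m})_m with g_{m0,m} |> m0 = m (which forces
   transitivity). *)
Record cell_space := CellSpace {
  csG : group;
  csM : Type;
  cact : csG -> csM -> csM;
  cact1 : forall m, cact (gone csG) m = m;
  cactM : forall g h m, cact (gmul g h) m = cact g (cact h m);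
  cm0 : csM;
  cg : csM -> csG;
  cgP : forall m, cact (cg m) cm0 = m }.

Section CellSpaceDefs.
Variable R : cell_space.
Local Notation G := (csG R).
Local Notation M := (csM R).

Definition stab : set G := [set g | cact g (cm0 R) = cm0 R].

Definition lcoset (g : G) : set G :=
  [set h | exists g0, stab g0 /\ h = gmul g g0].

Definition coset := {S : set G | exists g, S = lcoset g}.

Definition crepr (c : coset) : G := projT1 (cid (proj2_sig c)).

Definition coset_act (g : G) (c : coset) : coset :=
  exist _ (lcoset (gmul g (crepr c))) (ex_intro _ _ erefl).

(* right semi-action m <| gG_0 = g_{m0,m} g |> m0 (independent of the
   representative g) *)
Definition rsa (m : M) (c : coset) : M := cact (gmul (cg m) (crepr c)) (cm0 R).

Definition fa_prob {K : realType} (mu : set M -> K) :=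
  [/\ forall A, 0 <= mu A, mu setT = 1 &
      forall A B, A `&` B = set0 -> mu (A `|` B) = mu A + mu B].

Definition right_amenable (K : realType) :=
  exists mu : set M -> K, fa_prob mu /\
    forall (c : coset) (A : set M),
      {in A &, injective (fun m => rsa m c)} ->
      mu [set rsa a c | a in A] = mu A.

Definition global {Q : Type} {N : set coset} (delta : ({n | N n} -> Q) -> Q)
  (c : M -> Q) : M -> Q :=
  fun m => delta (fun n => c (rsa m (proj1_sig n))).

(* delta is bullet-invariant: delta (g0 . l) = delta l, where
   (g0 . l)(n) = l (g0^{-1} . n) *)
Definition bullet_invariant {Q : Type} {N : set coset}
  (delta : ({n | N n} -> Q) -> Q) :=
  forall (g0 : G) (l l' : {n | N n} -> Q), stab g0 ->
    (forall n n' : {n | N n},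
        proj1_sig n' = coset_act (ginv g0) (proj1_sig n) -> l' n = l n') ->
    delta l' = delta l.

End CellSpaceDefs.
Arguments stab : clear implicits.

(* cardinality of a (finite) set; 0 when the set is infinite *)
Definition fincard {T : Type} (S : set T) : nat := xget 0%N [set n | (S #= `I_n)%card].

Definition restr {M Q : Type} (A : set M) (c : M -> Q) : {m | A m} -> Q :=
  fun x => c (proj1_sig x).

Definition proj_set {M Q : Type} (A : set M) (X : set (M -> Q)) :=
  [set @restr M Q A c | c in X].

Definition directed {I : Type} (le : I -> I -> Prop) :=
  [/\ (exists i : I, True), (forall i, le i i),
      (forall i j k, le i j -> le j k -> le i k) &
      (forall i j, exists k, le i k /\ le j k)].

Definition net_lim0 {K : realType} {I : Type} (le : I -> I -> Prop) (a : I -> K) :=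
  forall eps : K, 0 < eps -> exists i0, forall i, le i0 i -> `|a i| < eps.

Definition net_limsup {K : realType} {I : Type} (le : I -> I -> Prop) (a : I -> K)
  : \bar K :=
  ereal_inf [set ereal_sup [set (a i)%:E | i in le i0] | i0 in [set: I]].

Definition right_folner (R : cell_space) (K : realType) {I : Type}
  (le : I -> I -> Prop) (F : I -> set (csM R)) :=
  [/\ forall i, finite_set (F i) /\ F i !=set0 &
      forall c : coset R,
        net_lim0 le (fun i =>
          (fincard (F i `\` [set m | F i (rsa m c)]))%:R / (fincard (F i))%:R
            : K)].

Definition entropy (K : realType) {M Q : Type} {I : Type} (le : I -> I -> Prop)
  (F : I -> set M) (X : set (M -> Q)) : \bar K :=
  net_limsup le (fun i => ln ((fincard (@proj_set M Q (F i) X))%:R : K)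
                          / (fincard (F i))%:R).

(* Main.v *)
Require Import Defs.
From HB Require Import structures.
From mathcomp Require Import all_boot all_order all_algebra.
Set Implicit Arguments. Unset Strict Implicit. Unset Printing Implicit Defensive.

Section Count.
Variables (T Q : finType) (q0 : Q).
Implicit Types (S : {set {ffun T -> Q}}) (D : {set T}).

Definition prj D (f : {ffun T -> Q}) : {ffun T -> Q} :=
  [ffun x => if x \in D then f x else q0].
Definition imS S D := [set prj D f | f in S].

Lemma prj_sub D D' f : D \subset D' -> prj D (prj D' f) = prj D f.
Proof.
move=> /subsetP sD; apply/ffunP => x; rewrite !ffunE.
by case: ifP => // /sD ->.
Qed.

Lemma L1 S D1 D2 : #|imS S (D1 :|: D2)| <= #|imS S D1| * #|imS S D2|.
Proof.
rewrite -cardsX.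
have inj : {in imS S (D1 :|: D2) &, injective (fun g => (prj D1 g, prj D2 g))}.
  move=> g g' /imsetP[f _ eg] /imsetP[f' _ eg'] [e1 e2]; subst g g'.
  apply/ffunP => x.
  have := congr1 (fun h : {ffun T -> Q} => h x) e1.
  have := congr1 (fun h : {ffun T -> Q} => h x) e2.
  rewrite !ffunE !in_setU.
  by case: (x \in D1); case: (x \in D2).
rewrite -(card_in_imset inj); apply: subset_leq_card; apply/subsetP => y.
move=> /imsetP[g gin ->]; move: gin => /imsetP[f fS ->].
rewrite in_setX !prj_sub ?subsetUl ?subsetUr //.
by apply/andP; split; apply/imsetP; exists f.
Qed.

Lemma imS_sub S D : imS S D \subset [set f in pffun_on q0 D [set: Q]].
Proof.
apply/subsetP => g /imsetP[f _ ->]; rewrite inE.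
apply/pffun_onP; split; last by move=> y _; rewrite inE.
apply/subsetP => x; rewrite inE ffunE; case: ifP => //; by rewrite eqxx.
Qed.

Lemma L2 S D : #|imS S D| <= #|Q| ^ #|D|.
Proof.
apply: leq_trans (subset_leq_card (imS_sub S D)) _.
by rewrite cardsE card_pffun_on cardsT.
Qed.

Lemma L3 S D (p : {ffun T -> Q}) :
  (forall f, f \in S -> exists2 x, x \in D & f x != p x) ->
  #|imS S D| <= #|Q| ^ #|D| - 1.
Proof.
move=> Hp.
have pin : prj D p \in [set f in pffun_on q0 D [set: Q]].
  by apply: (subsetP (imS_sub [set p] D)); apply/imsetP; exists p; rewrite ?inE.
have -> : #|Q| ^ #|D| = #|[set f in pffun_on q0 D [set: Q]]|.
  by rewrite cardsE card_pffun_on cardsT.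
rewrite (cardsD1 (prj D p) [set f in pffun_on q0 D [set: Q]]) pin add1n subn1 /=.
apply: subset_leq_card; apply/subsetP => g gin; rewrite in_setD1.
apply/andP; split; last exact: (subsetP (imS_sub S D)).
apply/eqP => e; move: gin; rewrite e => /imsetP[f fS ef].
have [x xD] := Hp f fS; apply/negP; rewrite negbK.
have := congr1 (fun h : {ffun T -> Q} => h x) ef; rewrite !ffunE xD => ->.
by [].
Qed.

Lemma count_main S (a : nat) (bs : seq ({set T} * {ffun T -> Q})) :
  (forall b, b \in bs -> #|b.1| = a /\
     forall f, f \in S -> exists2 x, x \in b.1 & f x != b.2 x) ->
  forall D, #|imS S (D :|: \bigcup_(b <- bs) b.1)| <=
            #|Q| ^ #|D| * (#|Q| ^ a - 1) ^ (size bs).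
Proof.
elim: bs => [|b bs IH] Hb D.
  by rewrite big_nil setU0 muln1; exact: L2.
rewrite big_cons setUCA /=.
apply: leq_trans (L1 _ _ _) _.
have [ca Hm] := Hb b (mem_head _ _).
rewrite expnS mulnCA; apply: leq_mul.
  by rewrite -ca; exact: (L3 Hm).
by apply: IH => b' b'in; apply: Hb; rewrite in_cons b'in orbT.
Qed.

Lemma mem_bigU_seq x (bs : seq ({set T} * {ffun T -> Q})) :
  x \in \bigcup_(b <- bs) b.1 -> exists2 b, b \in bs & x \in b.1.
Proof.
elim: bs => [|b bs IH]; first by rewrite big_nil inE.
rewrite big_cons inE => /orP[h|/IH[b' h1 h2]]; first by exists b; rewrite ?mem_head.
by exists b'; rewrite // in_cons h1 orbT.
Qed.

Lemma card_bigU (a : nat) (bs : seq ({set T} * {ffun T -> Q})) :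
  (forall b, b \in bs -> #|b.1| = a) ->
  pairwise (fun b b' : {set T} * {ffun T -> Q} => [disjoint b.1 & b'.1]) bs ->
  #|\bigcup_(b <- bs) b.1| = a * size bs.
Proof.
elim: bs => [|b bs IH] Hb; first by rewrite big_nil cards0 muln0.
rewrite /= => /andP[/allP db pw]; rewrite big_cons cardsU.
have -> : b.1 :&: \bigcup_(b0 <- bs) b0.1 = set0.
  apply/setP => x; rewrite !inE; apply/negP => /andP[xb /mem_bigU_seq[b' b'in xb']].
  by have := db b' b'in; rewrite disjoint_sym => /disjointFr /(_ xb'); rewrite xb.
rewrite cards0 subn0 IH //; last by move=> b' h; apply: Hb; rewrite in_cons h orbT.
by rewrite Hb ?mem_head // mulnS.
Qed.

Lemma count_final S (a : nat) (bs : seq ({set T} * {ffun T -> Q})) :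
  (forall b, b \in bs -> #|b.1| = a /\
     forall f, f \in S -> exists2 x, x \in b.1 & f x != b.2 x) ->
  pairwise (fun b b' : {set T} * {ffun T -> Q} => [disjoint b.1 & b'.1]) bs ->
  #|S| <= #|Q| ^ (#|T| - a * size bs) * (#|Q| ^ a - 1) ^ (size bs).
Proof.
move=> Hb pw.
have := count_main Hb (~: \bigcup_(b <- bs) b.1).
rewrite setUC setUCr.
have -> : imS S [set: T] = S.
  apply/setP => f; apply/imsetP/idP => [[g gS ->]|fS]; last first.
    by exists f => //; apply/ffunP => x; rewrite ffunE inE.
  suff -> : prj [set: T] g = g by [].
  by apply/ffunP => x; rewrite ffunE inE.
have -> : #|~: \bigcup_(b <- bs) b.1| = #|T| - a * size bs.
  by rewrite -(card_bigU (fun b h => (Hb b h).1) pw) -(cardsC (\bigcup_(b <- bs) b.1)) addKn.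
by [].
Qed.
End Count.

Unset Implicit Arguments.
From mathcomp Require Import all_classical all_reals.
From mathcomp Require Import ereal exp.
From mathcomp Require Import finmap.
From Stdlib Require Import Lia.
From mathcomp Require Import zify ring lra.
Import Order.TTheory GRing.Theory Num.Theory.
Local Open Scope classical_set_scope.
Local Open Scope ring_scope.

Section GroupLemmas.
Variable G : group.
Implicit Types x y z : G.
Lemma gmulV' x : gmul x (ginv x) = gone G.
Proof.
rewrite -[gmul x _]gmul1 -{1}(gmulV (ginv x)) -gmulA (gmulA (ginv x) x).
by rewrite gmulV gmul1 gmulV.
Qed.
Lemma gmul1r x : gmul x (gone G) = x.
Proof. by rewrite -(gmulV x) gmulA gmulV' gmul1. Qed.
Lemma ginvK x : ginv (ginv x) = x.
Proof. by rewrite -[ginv (ginv x)]gmul1r -(gmulV x) gmulA gmulV gmul1. Qed.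
Lemma gmulKl x y : gmul (ginv x) (gmul x y) = y.
Proof. by rewrite gmulA gmulV gmul1. Qed.
Lemma gmulKr x y : gmul x (gmul (ginv x) y) = y.
Proof. by rewrite gmulA gmulV' gmul1. Qed.
End GroupLemmas.

Section CellLemmas.
Variable R : cell_space.
Local Notation G := (csG R).
Local Notation M := (csM R).
Local Notation m0 := (cm0 R).

Lemma cactK (g : G) (x : M) : cact (ginv g) (cact g x) = x.
Proof. by rewrite -cactM gmulV cact1. Qed.
Lemma cactVK (g : G) (x : M) : cact g (cact (ginv g) x) = x.
Proof. by rewrite -cactM gmulV' cact1. Qed.
Lemma cact_inj (g : G) : injective (cact g).
Proof. by move=> x y /(congr1 (cact (ginv g))); rewrite !cactK. Qed.

Lemma stab1 : stab R (gone G).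
Proof. exact: cact1. Qed.
Lemma stabV (g : G) : stab R g -> stab R (ginv g).
Proof. by rewrite /stab/= => h; rewrite -{1}h cactK. Qed.

Lemma crepr_spec (c : coset R) : proj1_sig c = lcoset (crepr c).
Proof. by rewrite /crepr; case: cid. Qed.

Lemma crepr_act (c : coset R) (g : G) : proj1_sig c = lcoset g ->
  cact (crepr c) m0 = cact g m0.
Proof.
move=> h.
have : lcoset (crepr c) g by rewrite -crepr_spec h; exists (gone G); split;
  [exact: stab1| by rewrite gmul1r].
by case=> g0 [s0 ->]; rewrite cactM s0.
Qed.

Lemma rsa_act (m : M) (g : G) (c : coset R) :
  rsa m (coset_act g c) = cact (cg m) (cact g (cact (crepr c) m0)).
Proof. by rewrite /rsa cactM (@crepr_act (coset_act g c) _ erefl) !cactM. Qed.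

Definition mkcoset (g : G) : coset R := exist _ (lcoset g) (ex_intro _ g erefl).

Lemma rsa_mk (m : M) (g : G) : rsa m (mkcoset g) = cact (cg m) (cact g m0).
Proof. by rewrite /rsa cactM (@crepr_act (mkcoset g) _ erefl). Qed.

Lemma rsaE (m : M) (c : coset R) : rsa m c = cact (cg m) (cact (crepr c) m0).
Proof. by rewrite /rsa cactM. Qed.

Variables (Q : Type) (N : set (coset R)) (delta : ({n | N n} -> Q) -> Q).
Hypothesis Hbi : bullet_invariant delta.

Lemma global_equiv (c : M -> Q) (g : G) (x : M) :
  global delta (fun z => c (cact g z)) x = global delta c (cact g x).
Proof.
rewrite /global; set m' := cact g x.
pose h := gmul (ginv (cg m')) (gmul g (cg x)).
have sh : stab R h.
  rewrite /stab /h /= cactM cactM cgP -/m' -{2}(cgP m'). exact: cactK.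
have := Hbi (ginv h); move=> H. apply: H; first exact: stabV. move=> n n' ->.
rewrite rsa_act ginvK !rsaE /h -!cactM; congr (c (cact _ _)).
by rewrite !gmulA gmulV' gmul1.
Qed.

Lemma range_equiv (y : M -> Q) (g : G) : range (global delta) y ->
  range (global delta) (fun z => y (cact g z)).
Proof.
case=> c _ <-; exists (fun z => c (cact g z)) => //.
by apply/funext => z; rewrite global_equiv.
Qed.
End CellLemmas.

Lemma filter_fin_forall T (U' : Type) (F : set_system T) (B : set U')
  (P : U' -> set T) : Filter F -> finite_set B ->
  (forall b, B b -> F (P b)) -> F [set t | forall b, B b -> P b t].
Proof.
move=> FF fB HP.
have := @filter_bigI T {classic U'} (fset_set (B : set {classic U'})) P F FF.
rewrite fset_setK //; apply=> i; rewrite in_fset_set // in_setE; exact: HP.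
Qed.

Section GoE.
Variable R : cell_space.
Local Notation G := (csG R).
Local Notation M := (csM R).
Variables (Q : finType) (N : set (coset R)) (delta : ({n | N n} -> Q) -> Q).

Lemma goe : finite_set N -> ~ (forall d : M -> Q, exists c, global delta c = d) ->
  exists A : set M, finite_set A /\ exists p : M -> Q,
    forall c : M -> Q, exists a, A a /\ global delta c a <> p a.
Proof.
move=> Nfin nsurj; apply: contrapT => nH; apply: nsurj => d.
have H1 : forall A : set M, exists c : M -> Q,
    finite_set A -> forall a, A a -> global delta c a = d a.
  move=> A; case: (pselect (finite_set A)) => fA; last by exists d.
  apply: contrapT => nc; apply: nH; exists A; split => //; exists d => c.
  apply: contrapT => nex; apply: nc; exists c => _ a Aa.
  by apply: contrapT => ne; apply: nex; exists a.
have [cA HcA] := choice H1.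
pose B (b : set M) : set (set M) := [set A | finite_set A /\ b `<=` A].
pose F0 := filter_from finite_set B.
have FF0 : ProperFilter F0.
  apply: filter_from_proper.
    apply: filter_from_filter; first by exists set0; exact: finite_set0.
    move=> i j fi fj; exists (i `|` j); first by rewrite finite_setU.
    move=> A [fA sA]; split; split=> //; apply: subset_trans sA;
      [exact: subsetUl|exact: subsetUr].
  by move=> i fi; exists i; split.
have [U [UU sFU]] := ultraFilterLemma FF0.
have H2 : forall m, exists q, U [set A | cA A m = q].
  move=> m; apply: contrapT => nq.
  have Hs : forall s : seq Q, U [set A | cA A m \notin s].
    elim=> [|q s IH]; first by apply: filterS filterT.
    have [Uq|Unq] := in_ultra_setVsetC [set A | cA A m = q] UU.
      by exfalso; apply: nq; exists q.
    apply: filterS (filterI Unq IH) => A [/= h1 h2].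
    by rewrite in_cons negb_or h2 andbT; apply/eqP.
  by have [A /=] := filter_ex (Hs (enum Q)); rewrite mem_enum.
have [c Hc] := choice H2.
exists c; apply/funext => m.
pose Bm := [set rsa m n | n in N] `|` [set m].
have fBm : finite_set Bm by rewrite finite_setU; split;
  [exact: finite_image | exact: finite_set1].
have U1 : U (B Bm) by apply: sFU; exists Bm.
have U2 : U [set A | forall b, Bm b -> cA A b = c b].
  apply: (@filter_fin_forall _ _ U Bm (fun b => [set A | cA A b = c b])) => //; try (by move=> b _; exact: Hc).
have [A [[fA sA] agr]] := filter_ex (filterI U1 U2).
rewrite -(HcA A fA m); last by apply: sA; right.
rewrite /global; congr delta; apply/funext => n.
by rewrite agr //; left; exists (sval n) => //; exact: (svalP n).
Qed.
End GoE.

Set Implicit Arguments.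

Lemma fincard_eq T (A : set T) n : (A #= `I_n)%card -> fincard A = n.
Proof.
move=> An; apply: xget_unique => // m Am.
apply/card_eq_II; exact: card_eq_trans (card_esym Am) An.
Qed.

Lemma fincard_eqI T U (A : set T) (B : set U) : (A #= B)%card -> fincard A = fincard B.
Proof.
move=> AB; rewrite /fincard; congr xget; apply/funext => n; apply/propext.
split => h; first exact: card_eq_trans (card_esym AB) h.
exact: card_eq_trans AB h.
Qed.

Lemma setW_card (T : finType) (W : {set T}) : ([set` W] #= `I_#|W|)%card.
Proof.
have -> : [set` W] = [set` [fset x in W]%fset].
  by apply/funext => x; apply/propext; rewrite /= !inE.
by apply/card_eq_fsetP; rewrite card_finset.
Qed.

Lemma fincard_fin (T : finType) (W : {set T}) : fincard [set` W] = #|W|.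
Proof. exact/fincard_eq/setW_card. Qed.

Lemma fincard_inj_image T U (A : set T) (f : T -> U) :
  {in A &, injective f} -> fincard (f @` A) = fincard A.
Proof. by move=> inj; apply: fincard_eqI; exact: inj_card_eq. Qed.

Lemma fincard_le (T : finType) U (W : {set T}) (f : T -> U) (S0 : set U) :
  finite_set S0 -> {in W &, injective f} -> (forall x, x \in W -> S0 (f x)) ->
  (#|W| <= fincard S0)%N.
Proof.
move=> /finite_setP[s Ss] inj sub; rewrite (fincard_eq Ss).
move: Ss; rewrite card_eq_le => /andP[Ss1 _].
have h1 : (f @` [set` W] #<= `I_s)%card.
  apply: card_le_trans Ss1; apply: subset_card_le => _ [x xW <-]; exact: sub.
have h2 : (`I_#|W| #<= f @` [set` W])%card.
  have := card_esym (setW_card W); rewrite card_eq_le => /andP[h _].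
  apply: card_le_trans h _.
  have inj' : {in [set` W] &, injective f}.
    by move=> x y; rewrite !in_setE => hx hy; apply: (inj).
  have := card_esym (inj_card_eq inj'); rewrite card_eq_le => /andP[h' _].
  exact: h'.
by rewrite -card_le_II; apply: card_le_trans h1.
Qed.

Lemma card_bigcup_le (T I : finType) (D : {pred I}) (B : I -> {set T}) :
  (#|\big[@finset.setU T/finset.set0]_(i in D) B i| <= \sum_(i in D) #|B i|)%N.
Proof.
elim/big_rec2: _ => [|i x y _ h]; first by rewrite cards0.
by rewrite cardsU; apply: leq_trans (leq_subr _ _) _; rewrite leq_add2l.
Qed.

Section PerI.
Variable R : cell_space.
Local Notation G := (csG R).
Local Notation M := (csM R).
Local Notation m0 := (cm0 R).
Variables (Q : finType) (F0 : set M) (X : set (M -> Q)) (TA : finType)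
  (eA : TA -> M) (p : M -> Q).
Hypotheses (fF0 : finite_set F0) (Xne : X !=set0) (eA_inj : injective eA)
  (Hmiss : forall m y, X y -> exists t, y (cact (cg m) (eA t)) != p (eA t))
  (fstab : finite_set (stab R)).

Let Tt0 := fset_set (F0 : set {classic M}).
Let Tt := fset_sub_type Tt0.
Let vT (j : Tt) : M := fsval j.

Lemma vT_inj : injective vT.
Proof. exact: val_inj. Qed.

Lemma vT_F0 (j : Tt) : F0 (vT j).
Proof. by have := fsvalP j; rewrite in_fset_set // in_setE. Qed.

Lemma F0_vT m : F0 m -> exists j : Tt, vT j = m.
Proof.
move=> Fm; have mT : (m : {classic M}) \in Tt0 by rewrite in_fset_set // in_setE.
by exists (FSetSub mT).
Qed.

Lemma fincard_Tt (W : {set Tt}) : fincard (vT @` [set` W]) = #|W|.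
Proof.
rewrite fincard_inj_image ?fincard_fin //.
by move=> x y _ _; exact: vT_inj.
Qed.

Lemma fincard_F0P (P : set M) :
  fincard (F0 `&` P) = #|[set j : Tt | `[< P (vT j) >]]%SET|.
Proof.
rewrite -fincard_Tt; congr fincard; apply/seteqP; split.
  move=> m [Fm Pm]; have [j ej] := F0_vT Fm; exists j => //.
  by rewrite /= inE; apply/asboolP; rewrite ej.
move=> y [j]; rewrite /= inE => /asboolP Pj <-; split => //; exact: vT_F0.
Qed.

Lemma fincard_F0 : fincard F0 = #|Tt|.
Proof.
have -> : #|Tt| = #|[set j : Tt | `[< setT (vT j) >]]%SET|.
  by apply: eq_card => j; rewrite !inE; apply/esym/asboolP.
by rewrite -fincard_F0P setIT.
Qed.

Let a := #|TA|.

Definition blk (j : Tt) : {set Tt} :=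
  [set j' | `[< exists t, vT j' = cact (cg (vT j)) (eA t) >]]%SET.
Definition Cs : {set Tt} :=
  [set j | `[< forall t, F0 (cact (cg (vT j)) (eA t)) >]]%SET.
Definition pat (j : Tt) : {ffun Tt -> Q} :=
  [ffun x => p (cact (ginv (cg (vT j))) (vT x))].
Definition Sset : {set {ffun Tt -> Q}} :=
  [set f : {ffun Tt -> Q} | `[< exists y, X y /\ forall x, f x = y (vT x) >]]%SET.

Lemma card_blk j : j \in Cs -> #|blk j| = a.
Proof.
rewrite inE => /asboolP jC.
rewrite -fincard_Tt.
have -> : vT @` [set` blk j] =
    (fun t => cact (cg (vT j)) (eA t)) @` [set` [set: TA]%SET].
  apply/seteqP; split.
    move=> z [x]; rewrite /= inE => /asboolP[t ->] <-.
    by exists t => //=; rewrite inE.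
  move=> z [t _ <-]; have [x ex] := F0_vT (jC t).
  by exists x => //=; rewrite inE; apply/asboolP; exists t.
rewrite fincard_inj_image ?fincard_fin ?cardsT //.
by move=> x y _ _ /cact_inj /eA_inj.
Qed.

Lemma blk_miss j : j \in Cs ->
  forall f, f \in Sset -> exists2 x, x \in blk j & f x != pat j x.
Proof.
rewrite inE => /asboolP jC f; rewrite inE => /asboolP[y [Xy fy]].
have [t ht] := Hmiss (vT j) Xy.
have [x ex] := F0_vT (jC t).
exists x; first by rewrite inE; apply/asboolP; exists t.
by rewrite fy ffunE ex cactK.
Qed.

Lemma fincard_proj : fincard (@proj_set M Q F0 X) = #|Sset|.
Proof.
pose psi (r : {m | F0 m} -> Q) : {ffun Tt -> Q} :=
  [ffun x => r (exist _ (vT x) (vT_F0 x))].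
have psi_inj : {in @proj_set M Q F0 X &, injective psi}.
  move=> r r' _ _ e; apply/funext => -[m Fm].
  have [x ex] := F0_vT Fm.
  have := congr1 (fun h : {ffun Tt -> Q} => h x) e; rewrite !ffunE.
  have -> : exist F0 (vT x) (vT_F0 x) = exist F0 m Fm.
    by move: (vT_F0 x); rewrite ex => pf; congr exist; exact: Prop_irrelevance.
  by [].
rewrite -(fincard_inj_image psi_inj) -fincard_fin; congr fincard.
apply/seteqP; split.
  move=> z [r [c Xc <-] <-]; rewrite /= inE; apply/asboolP; exists c; split => //.
  by move=> x; rewrite ffunE.
move=> f; rewrite /= inE => /asboolP[y [Xy fy]].
exists (@restr M Q F0 y); first by exists y.
by apply/ffunP => x; rewrite ffunE fy.
Qed.


Definition goodE (E : {set Tt}) :=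
  (E \subset Cs) &&
  [forall j in E, forall j' in E, (j != j') ==> [disjoint blk j & blk j']].

Lemma good0 : goodE finset.set0.
Proof.
rewrite /goodE finset.sub0set /=; apply/forallP => j; apply/implyP; by rewrite inE.
Qed.

Definition Emax : {set Tt} := [arg max_(E0 > finset.set0 | goodE E0) #|E0|].

Lemma Emax_good : goodE Emax.
Proof. by rewrite /Emax; case: arg_maxnP => //; exact: good0. Qed.

Lemma Emax_max E : goodE E -> (#|E| <= #|Emax|)%N.
Proof. by rewrite /Emax; case: arg_maxnP => [|E0 _ h]; [exact: good0|exact: h]. Qed.

Definition Nb (e : Tt) : {set Tt} := [set j | ~~ [disjoint blk j & blk e]]%SET.

Lemma a_pos : (0 < a)%N.
Proof.
have [y Xy] := Xne; have [t _] := Hmiss m0 Xy.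
by apply/card_gt0P; exists t.
Qed.

Lemma Cs_cover : Cs \subset \big[@finset.setU Tt/finset.set0]_(e in Emax) Nb e.
Proof.
apply/fintype.subsetP => j jC; apply/finset.bigcupP; apply: contrapT => hn.
have hd : forall e, e \in Emax -> [disjoint blk j & blk e]%B.
  move=> e eE; apply: contrapT => /negP h; apply: hn; exists e => //.
  by rewrite inE.
have /andP[sE pE] := Emax_good.
case: (boolP (j \in Emax)) => jE.
  have := hd j jE; rewrite -finset.setI_eq0 finset.setIid => /eqP h0.
  by have := card_blk jC; rewrite h0 cards0 => ha; have := a_pos; rewrite -ha.
have : goodE (j |: Emax).
  apply/andP; split.
    by rewrite finset.subUset finset.sub1set jC.
  apply/forallP => x; apply/implyP; rewrite finset.in_setU1 => /orP[/eqP ->|xE].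
    apply/forallP => y; apply/implyP; rewrite finset.in_setU1 => /orP[/eqP ->|yE].
      by rewrite eqxx.
    by rewrite hd ?implybT.
  apply/forallP => y; apply/implyP; rewrite finset.in_setU1 => /orP[/eqP ->|yE].
    by rewrite disjoint_sym hd ?implybT.
  by move/forallP: pE => /(_ x) /implyP /(_ xE) /forallP /(_ y) /implyP /(_ yE).
move/Emax_max; rewrite finset.cardsU1 jE add1n ltnn.
by [].
Qed.


Let s := fincard (stab R).

Lemma card_W (t t' : TA) (e : Tt) :
  (#|[set j : Tt | `[< cact (cg (vT j)) (eA t) = cact (cg (vT e)) (eA t') >]]%SET|
    <= s)%N.
Proof.
set b := cact (cg (vT e)) (eA t').
apply: (@fincard_le _ _ _
  (fun j => gmul (ginv (cg b)) (gmul (cg (vT j)) (cg (eA t))))) => //.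
  move=> x y _ _ /= h.
  have h2 : cg (vT x) = cg (vT y).
    have := congr1 (fun g => gmul g (ginv (cg (eA t)))) (congr1 (gmul (cg b)) h).
    by rewrite !gmulKr -!gmulA !gmulV' !gmul1r.
  by apply: vT_inj; rewrite -(cgP (vT x)) -(cgP (vT y)) h2.
move=> j; rewrite inE => /asboolP hj.
rewrite /stab /= !cactM cgP hj -/b -{2}(cgP b); exact: cactK.
Qed.

Lemma card_Nb e : (#|Nb e| <= a * a * s)%N.
Proof.
pose W (tt : TA * TA) : {set Tt} :=
  [set j | `[< cact (cg (vT j)) (eA tt.1) = cact (cg (vT e)) (eA tt.2) >]]%SET.
have sub : Nb e \subset \big[@finset.setU Tt/finset.set0]_(tt in (predT : {pred TA * TA})) W tt.
  apply/fintype.subsetP => j; rewrite inE -finset.setI_eq0 => /finset.set0Pn[x].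
  rewrite inE => /andP[]; rewrite !inE => /asboolP[t ht] /asboolP[t' ht'].
  apply/finset.bigcupP; exists (t, t') => //; rewrite inE; apply/asboolP.
  by rewrite /= -ht -ht'.
apply: leq_trans (subset_leq_card sub) _.
apply: leq_trans (card_bigcup_le _ _) _.
have hs : (\sum_(tt in (predT : {pred TA * TA})) #|W tt| <=
           \sum_(tt in (predT : {pred TA * TA})) s)%N.
  by apply: leq_sum => tt _; exact: card_W.
apply: leq_trans hs _.
by rewrite sum_nat_const card_prod.
Qed.


Lemma n_le_2C :
  (forall t, 2 * a * fincard (F0 `\` [set m | F0 (cact (cg m) (eA t))]) < fincard F0)%N ->
  (fincard F0 <= 2 * #|Cs|)%N.
Proof.
move=> Hf.
pose Bad (t : TA) : {set Tt} := [set j | `[< ~ F0 (cact (cg (vT j)) (eA t)) >]]%SET.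
have cB t : #|Bad t| = fincard (F0 `\` [set m | F0 (cact (cg m) (eA t))]).
  by rewrite setDE fincard_F0P.
have sub : (~: Cs) \subset \big[@finset.setU Tt/finset.set0]_(t in (predT : {pred TA})) Bad t.
  apply/fintype.subsetP => j; rewrite !inE => /asboolP hj.
  apply/finset.bigcupP; move/existsNP: hj => [t ht]; exists t => //.
  by rewrite inE; apply/asboolP.
have h1 := leq_trans (subset_leq_card sub) (card_bigcup_le _ _).
have h2 : (2 * a * \sum_(t in (predT : {pred TA})) #|Bad t| <= a * fincard F0)%N.
  rewrite big_distrr /=.
  have -> : (a * fincard F0 = \sum_(t in (predT : {pred TA})) fincard F0)%N.
    by rewrite sum_nat_const mulnC.
  by apply: leq_sum => t _; rewrite cB; apply: ltnW.
have h3 : (2 * #|~: Cs| <= fincard F0)%N.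
  rewrite -(leq_pmul2l a_pos) mulnA (mulnC a 2).
  by apply: leq_trans h2; rewrite leq_mul2l h1 orbT.
have := cardsC Cs; rewrite -fincard_F0 => h4.
lia.
Qed.

Lemma per_i :
  (forall t, 2 * a * fincard (F0 `\` [set m | F0 (cact (cg m) (eA t))]) < fincard F0)%N ->
  exists k, [/\ (fincard F0 <= 2 * (a * a * s) * k)%N, (a * k <= fincard F0)%N,
   (fincard (@proj_set M Q F0 X) <= #|Q| ^ (fincard F0 - a * k) * (#|Q| ^ a - 1) ^ k)%N &
   (0 < fincard (@proj_set M Q F0 X))%N].
Proof.
move=> Hf; exists #|Emax|.
have /andP[sE pE] := Emax_good.
pose bs := [seq (blk j, pat j) | j <- enum Emax].
have Hb : forall b, b \in bs -> (#|b.1| = a) /\ (forall f, f \in Sset -> exists2 x, x \in b.1 & f x != b.2 x).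
  move=> b /mapP[j]; rewrite mem_enum => jE ->; have jC := fintype.subsetP sE j jE.
  by split; [exact: card_blk | exact: blk_miss].
have pw : pairwise (fun b b' : {set Tt} * {ffun Tt -> Q} => [disjoint b.1 & b'.1]%B) bs.
  rewrite pairwise_map.
  apply: (@sub_in_pairwise _ (mem Emax) (SimplRel (fun x y : Tt => x != y))).
      move=> x y xE yE /= nxy.
      by move/forallP: pE => /(_ x) /implyP /(_ xE) /forallP /(_ y) /implyP /(_ yE) /implyP /(_ nxy).
    by apply/allP => x; rewrite mem_enum.
  by rewrite -uniq_pairwise enum_uniq.
have szb : size bs = #|Emax| by rewrite size_map cardE.
split.
- apply: leq_trans (n_le_2C Hf) _; rewrite -mulnA leq_mul2l; apply/orP; right.
  apply: leq_trans (subset_leq_card Cs_cover) _.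
  apply: leq_trans (card_bigcup_le _ _) _.
  rewrite mulnC -sum_nat_const; apply: leq_sum => e _; exact: card_Nb.
- rewrite -szb -(card_bigU (fun b h => (Hb b h).1) pw) fincard_F0.
  exact: max_card.
- rewrite fincard_proj -szb fincard_F0.
  exact: (count_final (p m0) Hb pw).
- rewrite fincard_proj; apply/card_gt0P.
  have [y Xy] := Xne; exists [ffun x => y (vT x)].
  by rewrite inE; apply/asboolP; exists y; split => // x; rewrite ffunE.
Qed.

End PerI.

Lemma real_bound (Rt : realType) (q a Kc n k C : nat) :
  (2 <= q)%N -> (0 < a)%N -> (0 < n)%N -> (n <= 2 * Kc * k)%N ->
  (a * k <= n)%N -> (0 < C)%N ->
  (C <= q ^ (n - a * k) * (q ^ a - 1) ^ k)%N ->
  ln (C%:R : Rt) / n%:R <=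
    ln (q%:R : Rt) - (a%:R * ln (q%:R : Rt) - ln ((q ^ a - 1)%N%:R : Rt)) / (2 * Kc)%N%:R
  /\ ln (q%:R : Rt) - (a%:R * ln (q%:R : Rt) - ln ((q ^ a - 1)%N%:R : Rt)) / (2 * Kc)%N%:R
     < ln (q%:R : Rt).
Proof.
move=> q2 a0 n0 hK hak C0 hC.
have qpos : (0 : Rt) < q%:R by rewrite ltr0n; lia.
have qqa : (q <= q ^ a)%N by rewrite -{1}(expn1 q) leq_pexp2l //; lia.
have lpos : (0 : Rt) < (q ^ a - 1)%N%:R by rewrite ltr0n; lia.
have K0 : (0 < Kc)%N by case: Kc hK => //; rewrite mulnC /=; lia.
have K0r : (0 : Rt) < (2 * Kc)%N%:R by rewrite ltr0n; lia.
have n0r : (0 : Rt) < n%:R by rewrite ltr0n.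

set L := ln (q%:R : Rt); set L1 := ln ((q ^ a - 1)%N%:R : Rt).
have hL1 : L1 < a%:R * L.
  have qa0 : (0 < q ^ a)%N by rewrite expn_gt0 (ltn_trans _ q2).
  have qapos : (0 : Rt) < (q ^ a)%N%:R by rewrite ltr0n.
  rewrite /L1 /L mulr_natl -lnXn // -natrX ltr_ln ?posrE //.
  by rewrite ltr_nat ltn_subrL qa0.
have hC' : ln (C%:R : Rt) <= (n - a * k)%N%:R * L + k%:R * L1.
  have P1 : (0 : Rt) < (q ^ (n - a * k))%N%:R by rewrite ltr0n expn_gt0; lia.
  have P2 : (0 : Rt) < ((q ^ a - 1) ^ k)%N%:R by rewrite ltr0n expn_gt0; lia.
  apply: le_trans (_ : ln ((q ^ (n - a * k) * (q ^ a - 1) ^ k)%N%:R) <= _).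
    by rewrite ler_ln ?posrE ?ltr0n ?muln_gt0 ?expn_gt0 ?ler_nat //; lia.
  by rewrite natrM lnM ?posrE // !natrX !lnXn // !mulr_natl.
set beta := a%:R * L - L1.
have bpos : 0 < beta by rewrite /beta subr_gt0.
have h1 : n%:R * beta / (2 * Kc)%N%:R <= k%:R * beta.
  rewrite ler_pdivrMr // -mulrA (mulrC beta) mulrA.
  apply: ler_wpM2r; first exact: ltW bpos.
  by rewrite -natrM ler_nat mulnC.
split; last by rewrite ltrBlDr ltrDl divr_gt0.
rewrite ler_pdivrMr //.
have e : (n - a * k)%N%:R = n%:R - a%:R * k%:R :> Rt by rewrite natrB // natrM.
rewrite e in hC'.
have -> : (L - beta / (2 * Kc)%N%:R) * n%:R = n%:R * L - n%:R * beta / (2 * Kc)%N%:R.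
  by rewrite /beta; ring.
have : (n%:R - a%:R * k%:R) * L + k%:R * L1 = n%:R * L - k%:R * beta.
  by rewrite /beta; ring.
lra.
Qed.

Lemma dir_ub (I : Type) (le : I -> I -> Prop) (X : finType) (f : X -> I) :
  directed le -> exists k, forall x, le (f x) k.
Proof.
case=> [[i0 _] _ letr ledir].
suff : forall s : seq X, exists k, forall x, x \in s -> le (f x) k.
  by case/(_ (enum X)) => k hk; exists k => x; apply: hk; rewrite mem_enum.
elim=> [|x s [k0 hk0]]; first by exists i0.
have [k [h1 h2]] := ledir (f x) k0.
exists k => y; rewrite in_cons => /orP[/eqP ->//|ys].
exact: letr (hk0 y ys) h2.
Qed.

Lemma fincard_pos T (A : set T) : finite_set A -> A !=set0 -> (0 < fincard A)%N.
Proof.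
move=> /finite_setP[n An] [x Ax]; rewrite (fincard_eq An).
case: n An => // An; exfalso.
have : (A #= @set0 nat)%card by rewrite II0 in An.
by rewrite card_eq0 => /eqP A0; rewrite A0 in Ax.
Qed.

Theorem theorem4 (K : realType) (R : cell_space)
  (Q : finType) (N : set (coset R))
  (delta : ({n | N n} -> Q) -> Q)
  (I : Type) (le : I -> I -> Prop) (F : I -> set (csM R)) :
  right_amenable R K ->
  finite_set (stab R) ->
  finite_set N ->
  (forall g0 n, stab R g0 -> N n -> N (coset_act g0 n)) ->
  directed le ->
  right_folner K le F ->
  bullet_invariant delta ->
  (1 < #|Q|)%N ->
  ~ (forall d : csM R -> Q, exists c, global delta c = d) ->
  (entropy K le F (range (global delta)) < (ln (#|Q|%:R : K))%:E)%E.
Proof.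
move=> _ fstab Nfin _ Hdir [HF Hnl] Hbi HQ nsurj.
have [_ lerefl letr _] := Hdir.
have [A [fA [p Hp]]] := @goe R Q N delta Nfin nsurj.
pose TA := fset_sub_type (fset_set (A : set {classic (csM R)})).
pose eA (t : TA) : csM R := fsval t.
have eA_inj : injective eA by exact: val_inj.
pose X := range (global delta).
have Xne : X !=set0 by exists (global delta p); exists p.
have Hmiss : forall m y, X y -> exists t : TA, y (cact (cg m) (eA t)) != p (eA t).
  move=> m y Xy; have [c _ ec] := @range_equiv R Q N delta Hbi y (cg m) Xy.
  have [x [Ax hx]] := Hp c.
  have xT : (x : {classic _}) \in fset_set (A : set {classic (csM R)}).
    by rewrite in_fset_set // in_setE.
  exists (FSetSub xT); rewrite /eA /=; apply/eqP => e; apply: hx.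
  by rewrite -e (congr1 (fun h => h x) ec).
pose a := #|TA|.
have Ha : forall t : TA, exists i0, forall i, le i0 i ->
    (2 * a * fincard (F i `\` [set m | F i (cact (cg m) (eA t))]) < fincard (F i))%N.
  move=> t.
  have a0 : (0 < a)%N by apply/card_gt0P; exists t.
  have epos : (0 : K) < (2 * a)%N%:R^-1 by rewrite invr_gt0 ltr0n; lia.
  have [i0 hi0] := Hnl (@mkcoset R (cg (eA t))) _ epos.
  exists i0 => i lei; have := hi0 i lei.
  have -> : [set m | F i (rsa m (@mkcoset R (cg (eA t))))] =
      [set m | F i (cact (cg m) (eA t))].
    by apply/funext => m; rewrite /= rsa_mk cgP.
  have n0 : (0 < fincard (F i))%N by apply: fincard_pos; case: (HF i).
  rewrite ger0_norm ?divr_ge0 // ltr_pdivrMr ?ltr0n // mulrC ltr_pdivlMr ?ltr0n;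
    last lia.
  by rewrite -natrM ltr_nat mulnC.
have [it Hit] := choice Ha.
have [istar Hstar] := dir_ub it Hdir.
pose s := fincard (stab R).
pose q := #|Q|.
pose B : K := ln (q%:R : K) -
  (a%:R * ln (q%:R : K) - ln ((q ^ a - 1)%N%:R : K)) / (2 * (a * a * s))%N%:R.
have Hval : forall i, le istar i ->
    ln ((fincard (@proj_set _ Q (F i) X))%:R : K) / (fincard (F i))%:R <= B
    /\ B < ln (q%:R : K).
  move=> i h.
  have Hf t := Hit t i (letr _ _ _ (Hstar t) h).
  have [k [h1 h2 h3 h4]] := per_i (HF i).1 Xne eA_inj Hmiss fstab Hf.
  have a0 : (0 < a)%N.
    by apply/card_gt0P; have [y Xy] := Xne; have [t _] := Hmiss (cm0 R) y Xy; exists t.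
  have n0 : (0 < fincard (F i))%N by apply: fincard_pos; case: (HF i).
  exact: (@real_bound K q a (a * a * s) (fincard (F i)) k _ HQ a0 n0 h1 h2 h4 h3).
have [_ BltL] := Hval istar (lerefl istar).
rewrite /entropy /net_limsup.
apply: (le_lt_trans _ (_ : B%:E < (ln (q%:R : K))%:E)%E); last by rewrite lte_fin.
apply: le_trans (ereal_inf_lbound _) _.
  by exists istar.
apply: ge_ereal_sup => _ [i lei <-]; rewrite lee_fin; exact: (Hval i lei).1.
Qed.
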